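(* Let $\mathbf{X}$ be either an $N$-sgrm over $\mathbb{R}^d$, or a good sgrm with $\dot{\mathbf{X}}_{s,s}\in\mathcal{L}^N(\mathbb{R}^d)$ for all $s$, and let $\mathfrak{B}^N$ be an orthonormal basis of $\mathcal{L}^N(\mathbb{R}^d)\subset T^N(\mathbb{R}^d)$. Then a smooth path $Y:[0,T]\to\mathbb{R}^e$ solves $dY=f(Y)\,d\mathbf{X}$ if and only if $$\dot Y_s=\sum_{\mathfrak{u}\in\mathfrak{B}^N}f_{\mathfrak{u}}(Y_s)\langle\dot{\mathbf{X}}_{s,s},\mathfrak{u}\rangle\quad\text{for all }s\in[0,T].$$
   Context: Fix $T>0$, $d,e\ge1$. $T((\mathbb{R}^d))$: formal tensor series over words in $\{1,\dots,d\}$ (incl. empty word $\mathbf{1}$), concatenation $\otimes$; $T^N(\mathbb{R}^d)$: span of words of length $\le N$ with truncated product $\otimes_N$, projection $\mathrm{proj}_N$; $\langle\mathbf{x},w\rangle$ the coefficient of $w$, extended bilinearly; $T^N(\mathbb{R}^d)$ carries the inner product making words orthonormal. Shuffle: bilinear, unit $\mathbf{1}$, $wi\sqcup\!\sqcup vj=(w\sqcup\!\sqcup vj)i+(wi\sqcup\!\sqcup v)j$. $\mathcal{L}(\mathbb{R}^d)$: Lie polynomials generated by the letters; $\mathcal{L}^N(\mathbb{R}^d)=\mathrm{proj}_N\mathcal{L}(\mathbb{R}^d)$. $N$-sgrm: non-zero $\mathbf{X}:[0,T]^2\to T^N(\mathbb{R}^d)$ with the shuffle relation $\langle\mathbf{X}_{s,t},v\sqcup\!\sqcup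 w\rangle=\langle\mathbf{X}_{s,t},v\rangle\langle\mathbf{X}_{s,t},w\rangle$ ($|v|+|w|\le N$), Chen's relation $\mathbf{X}_{s,u}\otimes_N\mathbf{X}_{u,t}=\mathbf{X}_{s,t}$, and smooth $t\mapsto\langle\mathbf{X}_{s,t},w\rangle$; sgrm: same in $T((\mathbb{R}^d))$ for all words with $\otimes$. Diagonal derivative $\dot{\mathbf{X}}_{s,s}=\partial_t|_{t=s}\mathbf{X}_{s,t}$. A good sgrm is the minimal extension of some $N'$-sgrm $\mathbf{Y}$, i.e. the unique sgrm agreeing with $\mathbf{Y}$ on words of length $\le N'$ whose diagonal derivative lies in $\mathcal{L}^{N'}(\mathbb{R}^d)$. Vector fields: $(f_1,\dots,f_d)$ smooth on $\mathbb{R}^e$ with bounded derivatives; $f\vartriangleright g:=f^i(\partial_ig^j)\partial_j$; $f_{\mathbf{1}}=\mathrm{id}$, $f_{\ell_1\cdots\ell_n}:=f_{\ell_1}\vartriangleright(\cdots\vartriangleright(f_{\ell_{n-1}}\vartriangleright f_{\ell_n})\cdots)$; for $\mathbf{x}\in T(\mathbb{R}^d)$, $f_{\mathbf{x}}:=\sum_w\langle\mathbf{x},w\rangle f_w$. For such $\mathbf{X}$, ''$Y$ solves $dY=f(Y)d\mathbf{X}$'' means $Y$ is smooth and $\dot Y_s=\sum_{|w|\le N}f_w(Y_s)\langle\dot{\mathbf{X}}_{s,s},w\rangle$ for all $s$. *)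

(* Defs.v *)
From HB Require Import structures.
From mathcomp Require Import all_boot all_order all_algebra.
From mathcomp Require Import all_classical all_reals all_analysis.
Set Implicit Arguments. Unset Strict Implicit. Unset Printing Implicit Defensive.
Import Order.TTheory GRing.Theory Num.Theory.
Import numFieldNormedType.Exports.
Local Open Scope classical_set_scope.
Local Open Scope ring_scope.

Section Defs.
Variable R : realType.

Definition I0T (T : R) : set R := [set x | 0 <= x <= T].

Definition has_deriv_within (V : normedModType R) (T : R) (g : R -> V)
    (s : R) (l : V) : Prop :=
  (fun h : R => h^-1 *: (g (s + h) - g s))
    @ (within [set h : R | h != 0 /\ I0T T (s + h)] (nbhs (0 : R))) --> l.

Definition smooth_on (V : normedModType R) (T : R) (g : R -> V) : Prop :=
  exists D : nat -> R -> V,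
    (forall s, I0T T s -> D 0%N s = g s) /\
    (forall k s, I0T T s -> has_deriv_within T (D k) s (D k.+1 s)).

(** Tensor series over words in {1..d}: coefficient functions on words. *)
Definition tensor (d : nat) := seq 'I_d -> R.

(** Words of length <= N are enumerated as k.-tuples, k <= N. *)
Definition ip (d N : nat) (x y : tensor d) : R :=
  \sum_(k < N.+1) \sum_(t : k.-tuple 'I_d) x t * y t.

Definition proj (d N : nat) (x : tensor d) : tensor d :=
  fun w => if (size w <= N)%N then x w else 0.

Definition tmul (d : nat) (x y : tensor d) : tensor d :=
  fun w => \sum_(i < (size w).+1) x (take i w) * y (drop i w).
Definition tmulN (d N : nat) (x y : tensor d) : tensor d :=
  proj N (tmul x y).

Definition letter (d : nat) (i : 'I_d) : tensor d :=
  fun w => if w == [:: i] then 1 else 0.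

(** Shuffle, by the last-letter recursion
    wi ⧢ vj = (w ⧢ vj) i + (wi ⧢ v) j, as a list (multiset) of words.
    sh_rev works on reversed words, so its first-letter recursion is the
    last-letter recursion of the original words. *)
Fixpoint sh_rev (d : nat) (v : seq 'I_d) : seq 'I_d -> seq (seq 'I_d) :=
  match v with
  | [::] => fun w => [:: w]
  | i :: v' =>
    fix shv (w : seq 'I_d) : seq (seq 'I_d) :=
      match w with
      | [::] => [:: i :: v']
      | j :: w' => map (cons i) (sh_rev v' (j :: w')) ++ map (cons j) (shv w')
      end
  end.
Definition shuffle (d : nat) (v w : seq 'I_d) : seq (seq 'I_d) :=
  map (@rev _) (sh_rev (rev v) (rev w)).

Definition pair_sh (d : nat) (x : tensor d) (v w : seq 'I_d) : R :=
  \sum_(u <- shuffle v w) x u.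

Inductive lie (d : nat) : tensor d -> Prop :=
| lie_zero : lie (fun _ => 0)
| lie_letter i : lie (letter i)
| lie_add a b : lie a -> lie b -> lie (fun w => a w + b w)
| lie_scale (c : R) a : lie a -> lie (fun w => c * a w)
| lie_bracket a b : lie a -> lie b -> lie (fun w => tmul a b w - tmul b a w).

Definition in_LN (d N : nat) (x : tensor d) : Prop :=
  exists l, lie l /\ x = proj N l.

Definition orthonormal_basis_LN (d N m : nat) (B : 'I_m -> tensor d) : Prop :=
  (forall u, in_LN N (B u)) /\
  (forall u v, ip N (B u) (B v) = (u == v)%:R) /\
  (forall x, in_LN N x -> exists c : 'I_m -> R,
      forall w, x w = \sum_(u < m) c u * B u w).

Definition is_Nsgrm (d : nat) (T : R) (N : nat) (X : R -> R -> tensor d) : Prop :=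
  (forall s t, I0T T s -> I0T T t -> forall w, (N < size w)%N -> X s t w = 0) /\
  (exists s t, I0T T s /\ I0T T t /\ X s t <> (fun _ => 0)) /\
  (forall s t, I0T T s -> I0T T t -> forall v w, (size v + size w <= N)%N ->
      pair_sh (X s t) v w = X s t v * X s t w) /\
  (forall s u t, I0T T s -> I0T T u -> I0T T t ->
      tmulN N (X s u) (X u t) = X s t) /\
  (forall s w, I0T T s -> smooth_on T (fun t => X s t w)).

Definition is_sgrm (d : nat) (T : R) (X : R -> R -> tensor d) : Prop :=
  (exists s t, I0T T s /\ I0T T t /\ X s t <> (fun _ => 0)) /\
  (forall s t, I0T T s -> I0T T t -> forall v w,
      pair_sh (X s t) v w = X s t v * X s t w) /\
  (forall s u t, I0T T s -> I0T T u -> I0T T t ->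
      tmul (X s u) (X u t) = X s t) /\
  (forall s w, I0T T s -> smooth_on T (fun t => X s t w)).

Definition is_diag_deriv (d : nat) (T : R) (X : R -> R -> tensor d)
    (Xdot : R -> tensor d) : Prop :=
  forall s w, I0T T s -> has_deriv_within T (fun t => X s t w) s (Xdot s w).

(** good sgrm: minimal extension of some N'-sgrm Y *)
Definition is_good_sgrm (d : nat) (T : R) (X : R -> R -> tensor d)
    (Xdot : R -> tensor d) : Prop :=
  is_sgrm T X /\
  exists (N' : nat) (Y : R -> R -> tensor d),
    is_Nsgrm T N' Y /\
    (forall s t, I0T T s -> I0T T t -> forall w, (size w <= N')%N ->
        X s t w = Y s t w) /\
    (forall s, I0T T s -> in_LN N' (Xdot s)).

Definition pD (e : nat) (i : 'I_e) (g : 'rV[R]_e -> 'rV[R]_e) : 'rV[R]_e -> 'rV[R]_e :=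
  fun y => 'D_(delta_mx 0 i) g y.

Fixpoint Dn (e : nat) (js : seq 'I_e) (g : 'rV[R]_e -> 'rV[R]_e) : 'rV[R]_e -> 'rV[R]_e :=
  match js with
  | [::] => g
  | i :: js' => pD i (Dn js' g)
  end.

Definition vector_field (e : nat) (g : 'rV[R]_e -> 'rV[R]_e) : Prop :=
  (forall js y, differentiable (Dn js g) y) /\
  (forall js, js != [::] -> exists M : R, forall y, `|Dn js g y| <= M).

Definition vf_comp (e : nat) (f g : 'rV[R]_e -> 'rV[R]_e) : 'rV[R]_e -> 'rV[R]_e :=
  fun y => \sum_(i < e) f y 0 i *: 'D_(delta_mx 0 i) g y.

Fixpoint fw (d e : nat) (f : 'I_d -> 'rV[R]_e -> 'rV[R]_e) (w : seq 'I_d)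
    : 'rV[R]_e -> 'rV[R]_e :=
  match w with
  | [::] => id
  | [:: l] => f l
  | l :: w' => vf_comp (f l) (fw f w')
  end.

Definition fT (d e N : nat) (f : 'I_d -> 'rV[R]_e -> 'rV[R]_e) (x : tensor d)
    : 'rV[R]_e -> 'rV[R]_e :=
  fun y => \sum_(k < N.+1) \sum_(t : k.-tuple 'I_d) x t *: fw f t y.

Definition solves (d e : nat) (T : R) (N : nat) (f : 'I_d -> 'rV[R]_e -> 'rV[R]_e)
    (Xdot : R -> tensor d) (Y : R -> 'rV[R]_e) : Prop :=
  smooth_on T Y /\
  forall s, I0T T s -> has_deriv_within T Y s
    (\sum_(k < N.+1) \sum_(t : k.-tuple 'I_d) Xdot s t *: fw f t (Y s)).

End Defs.

(* Main.v *)
Require Import Defs.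
From HB Require Import structures.
From mathcomp Require Import all_boot all_order all_algebra.
From mathcomp Require Import all_classical all_reals all_analysis.
From mathcomp Require Import zify ring lra.
Import Order.TTheory GRing.Theory Num.Theory.
Import numFieldNormedType.Exports.
Local Open Scope ring_scope.
Set Implicit Arguments. Unset Strict Implicit.

Section Alg.
Variable R : realType.
Variable d : nat.
Implicit Types (y x P : tensor R d) (u v w s t m : seq 'I_d).

Definition dR y (a : 'I_d) : tensor R d := fun z => y (rcons z a).
Definition term y u (i : nat) : R := pair_sh y (rev (take i u)) (drop i u).
Definition Ant y u := \sum_(i < (size u).+1) (-1) ^+ i * term y u i.
Definition Dyn y u := \sum_(i < (size u).+1) (-1) ^+ i * (((size u)%:R - i%:R) * term y u i).

Lemma ps_nil_l y w : pair_sh y [::] w = y w.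
Proof. by rewrite /pair_sh /shuffle /= revK big_cons big_nil addr0. Qed.

Lemma ps_nil_r y v : pair_sh y v [::] = y v.
Proof.
rewrite /pair_sh /shuffle /=.
have -> : v = rev (rev v) by rewrite revK.
rewrite revK; case: (rev v) => [|i v'] /=; by rewrite big_cons big_nil addr0.
Qed.

Lemma ps_rcons y v a w b : pair_sh y (rcons v a) (rcons w b) =
  pair_sh (dR y a) v (rcons w b) + pair_sh (dR y b) (rcons v a) w.
Proof.
rewrite /pair_sh /shuffle !rev_rcons /= map_cat big_cat -!map_comp !big_map.
congr (_ + _); apply: eq_bigr => z _ /=; by rewrite /dR rev_cons.
Qed.

Lemma letter_size (a : 'I_d) z : size z != 1%N -> letter R a z = 0.
Proof. by rewrite /letter; case: ifP => // /eqP ->. Qed.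

Lemma tmul_letter_r P a s c :
  tmul P (letter R a) (rcons s c) = if c == a then P s else 0.
Proof.
rewrite /tmul size_rcons big_ord_recr /= drop_oversize ?size_rcons //.
rewrite letter_size // mulr0 addr0 big_ord_recr /=.
rewrite -cats1 take_size_cat // drop_size_cat // big1 ?add0r.
  by rewrite /letter eqseq_cons andbT; case: (c == a); rewrite ?mulr1 ?mulr0.
move=> i _; rewrite letter_size ?mulr0 // size_drop size_cat /=.
have := ltn_ord i; move: (nat_of_ord i) => j hj; apply/eqP; lia.
Qed.

Lemma tmul_letter_r_nil P a : tmul P (letter R a) [::] = 0.
Proof. by rewrite /tmul big_ord_recr big_ord0 /= add0r /letter /= mulr0. Qed.

Lemma tmul_letter_l P a c s :
  tmul (letter R a) P (c :: s) = if c == a then P s else 0.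
Proof.
rewrite /tmul /= big_ord_recl /= /letter /= mul0r add0r big_ord_recl /=.
rewrite take0 drop0 eqseq_cons andbT big1 ?addr0.
  by case: (c == a); rewrite ?mul1r ?mul0r.
move=> i _; rewrite /bump /=.
rewrite add0n add1n.
case: s i => [|z s] i /=; first by case: i.
by rewrite eqseq_cons andbF mul0r.
Qed.

Lemma tmul_letter_l_nil P a : tmul (letter R a) P [::] = 0.
Proof. by rewrite /tmul big_ord_recr big_ord0 /= add0r /letter /= mul0r. Qed.


Lemma term_split y a m b i : (i <= (size m).+2)%N ->
  term y (a :: rcons m b) i =
  (if i is j.+1 then term (dR y a) (rcons m b) j else 0) +
  (if i == (size m).+2 then 0 else term (dR y b) (a :: m) i).
Proof.
case: i => [|j] hj.
  by rewrite add0r /term /= !ps_nil_l /dR.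
case: eqP => [[->]|hne].
  rewrite addr0 /term take_oversize ?drop_oversize /= ?size_rcons //.
  rewrite take_oversize ?drop_oversize ?size_rcons // !ps_nil_r /dR.
  by rewrite rev_cons.
have hjm : (j <= size m)%N.
  by move: hj hne; rewrite ltnS leq_eqVlt => /orP [/eqP -> //|].
rewrite /term /= rev_cons drop_rcons // ps_rcons; congr (_ + _).
rewrite rev_cons; congr (pair_sh _ (rcons (rev _) a) _).
by rewrite -cats1 takel_cat.
Qed.

Lemma sum_split y a m b (c : nat -> R) :
  \sum_(i < (size m).+3) c i * term y (a :: rcons m b) i =
  \sum_(j < (size m).+2) c j.+1 * term (dR y a) (rcons m b) j +
  \sum_(i < (size m).+2) c i * term (dR y b) (a :: m) i.
Proof.
rewrite (eq_bigr (fun i : 'I_(size m).+3 =>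
   c i * (if nat_of_ord i is j.+1 then term (dR y a) (rcons m b) j else 0) +
   c i * (if nat_of_ord i == (size m).+2 then 0 else term (dR y b) (a :: m) i))); last first.
  by move=> i _; rewrite term_split -?mulrDr // -ltnS ltn_ord.
rewrite big_split /=; congr (_ + _).
  by rewrite big_ord_recl /= mulr0 add0r.
rewrite big_ord_recr /= eqxx mulr0 addr0; apply: eq_bigr => i _ /=.
by rewrite ltn_eqF.
Qed.

Lemma Ant0 k y u : size u = k.+1 -> Ant y u = 0.
Proof.
elim: k y u => [|k IH] y u hu.
  case: u hu => [|c [|]] //= _.
  rewrite /Ant /= !big_ord_recr big_ord0 /= /term /= ps_nil_l ps_nil_r.
  by rewrite add0r expr0 expr1 mul1r mulN1r subrr.
case: u hu => [|a u'] //= [hu'].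
case/lastP: u' hu' => [|m b] //; rewrite size_rcons => [[hm]].
have E : Ant y (a :: rcons m b) = - Ant (dR y a) (rcons m b) + Ant (dR y b) (a :: m).
  rewrite /Ant /= !size_rcons sum_split; congr (_ + _); rewrite -sumrN.
  by apply: eq_bigr => j _; rewrite exprS mulN1r mulNr.
by rewrite E (IH _ (a :: m)) /= ?hm // (IH _ (rcons m b)) ?size_rcons ?hm // oppr0 addr0.
Qed.

Fixpoint Phi (n : nat) (x : tensor R d) : tensor R d :=
  match n with
  | 0 => fun _ => 0
  | k.+1 => match k with
            | 0 => fun w => \sum_(a < d) x [:: a] * letter R a w
            | _ => fun w => \sum_(a < d) (tmul (Phi k (dR x a)) (letter R a) w
                                          - tmul (letter R a) (Phi k (dR x a)) w)
            end
  end.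

Lemma lie_sum (I : Type) (r : seq I) (F : I -> tensor R d) :
  (forall i, lie (F i)) -> lie (fun w => \sum_(i <- r) F i w).
Proof.
move=> HF; elim: r => [|i r IH].
  have -> : (fun w => \sum_(i <- [::]) F i w) = (fun _ => 0).
    by apply/funext => w; rewrite big_nil.
  exact: lie_zero.
have -> : (fun w => \sum_(j <- i :: r) F j w) =
          (fun w => F i w + (fun w => \sum_(j <- r) F j w) w).
  by apply/funext => w; rewrite big_cons.
exact: lie_add.
Qed.

Lemma Phi_lie n x : lie (Phi n x).
Proof.
elim: n x => [|n IH] x /=; first exact: lie_zero.
case: n IH => [|k] IH.
  by apply: lie_sum => a; apply: lie_scale; apply: lie_letter.
by apply: lie_sum => a; apply: lie_bracket => //; apply: lie_letter.
Qed.

Lemma Phi_hom n x w : size w != n -> Phi n x w = 0.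
Proof.
elim: n x w => [|n IH] x w hw //=.
case: n IH hw => [|k] IH hw.
  by rewrite big1 // => a _; rewrite letter_size ?mulr0.
rewrite big1 // => a _.
have -> : tmul (Phi k.+1 (dR x a)) (letter R a) w = 0.
  case/lastP: w hw => [|s c] hw; first by rewrite tmul_letter_r_nil.
  rewrite tmul_letter_r; case: ifP => // _; apply: IH.
  by move: hw; rewrite size_rcons.
have -> : tmul (letter R a) (Phi k.+1 (dR x a)) w = 0.
  case: w hw => [|c s] hw; first by rewrite tmul_letter_l_nil.
  rewrite tmul_letter_l; case: ifP => // _; apply: IH.
  by move: hw.
by rewrite subrr.
Qed.

Lemma sum_if (c : 'I_d) (F : 'I_d -> R) :
  \sum_(a < d) (if c == a then F a else 0) = F c.
Proof.
rewrite (bigD1 c) //= eqxx big1 ?addr0 // => a /negbTE.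
by rewrite eq_sym => ->.
Qed.

Lemma natS n : (n.+1)%:R = n%:R + 1 :> R.
Proof. by rewrite -addn1 natrD. Qed.

Lemma PhiS k x w : Phi k.+2 x w = \sum_(a < d) (tmul (Phi k.+1 (dR x a)) (letter R a) w
                                          - tmul (letter R a) (Phi k.+1 (dR x a)) w).
Proof. by []. Qed.

Lemma Phi_Dyn k x u : size u = k.+1 -> Phi k.+1 x u = Dyn x u.
Proof.
elim: k x u => [|k IH] x u hu.
  case: u hu => [|c [|]] //= _.
  rewrite (eq_bigr (fun a => if c == a then x [:: a] else 0)); last first.
    by move=> a _; rewrite /letter eqseq_cons andbT; case: ifP; rewrite ?mulr1 ?mulr0.
  rewrite sum_if /Dyn /= !big_ord_recr big_ord0 /= /term /= ps_nil_l.
  by rewrite add0r expr0 mul1r subrr mul0r mulr0 addr0 subr0 mul1r.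
case: u hu => [|a u'] // hu; have hu' : size u' = k.+1 by case: hu.
case/lastP: u' hu' hu => [|m b] //; rewrite size_rcons => -[hm] _.
rewrite PhiS sumrB -rcons_cons.
under eq_bigr => c _ do rewrite tmul_letter_r.
rewrite rcons_cons.
under [X in _ - X]eq_bigr => c _ do rewrite tmul_letter_l.
have h1 : size (a :: m) = k.+1 by rewrite /= hm.
have h2 : size (rcons m b) = k.+1 by rewrite size_rcons hm.
rewrite !sum_if (IH _ _ h1) (IH _ _ h2).
rewrite /Dyn /= size_rcons.
rewrite (eq_bigr (fun i : 'I_(size m).+3 => ((-1) ^+ i * ((size m).+2%:R - i%:R)) * term x (a :: rcons m b) i)); last first.
  by move=> i _; rewrite mulrA.
rewrite (sum_split x a m b (fun i => (-1) ^+ i * ((size m).+2%:R - i%:R))).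
have HA := @Ant0 (size m) (dR x b) (a :: m) erefl.
move: HA; rewrite /Ant /= => HA.
have E1 : \sum_(i < (size m).+2) (-1) ^+ i * ((size m).+2%:R - i%:R) * term (dR x b) (a :: m) i =
  \sum_(i < (size m).+2) (-1) ^+ i * (((size m).+1%:R - i%:R) * term (dR x b) (a :: m) i) +
  \sum_(i < (size m).+2) (-1) ^+ i * term (dR x b) (a :: m) i.
  by rewrite -big_split; apply: eq_bigr => i _ /=; rewrite (natS (size m).+1); ring.
have E2 : \sum_(j < (size m).+2) (-1) ^+ j.+1 * ((size m).+2%:R - j.+1%:R) * term (dR x a) (rcons m b) j =
  - \sum_(j < (size m).+2) (-1) ^+ j * (((size m).+1%:R - j%:R) * term (dR x a) (rcons m b) j).
  rewrite -sumrN; apply: eq_bigr => j _.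
  by rewrite exprS (natS (size m).+1) (natS j); ring.
by rewrite /= E1 E2 HA addr0 addrC.
Qed.

Definition prim N x := forall v w, v != [::] -> w != [::] ->
  (size v + size w <= N)%N -> pair_sh x v w = 0.

Lemma Dyn_prim N x u : prim N x -> (size u <= N)%N -> Dyn x u = (size u)%:R * x u.
Proof.
move=> hp hu; rewrite /Dyn big_ord_recl /= expr0 mul1r subr0 /term take0 drop0 ps_nil_l.
rewrite big1 ?addr0 // => i _.
have hi := ltn_ord i; rewrite /bump leq0n add1n.
have [e|ne] := eqVneq i.+1 (size u).
  by rewrite [X in X%:R - _](esym e) subrr mul0r mulr0.
have hlt : (i.+1 < size u)%N by rewrite ltn_neqAle ne hi.
rewrite hp ?mulr0 //.
- by rewrite -size_eq0 size_rev size_takel.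
- by rewrite -size_eq0 size_drop subn_eq0 -ltnNge.
- by rewrite size_rev size_takel // size_drop subnKC.
Qed.

Definition Lsum N x : tensor R d :=
  fun w => \sum_(n < N) ((n.+1)%:R)^-1 * Phi (n.+1) x w.

Lemma in_LN_prim N x : x [::] = 0 -> prim N x -> in_LN N (Defs.proj N x).
Proof.
move=> h0 hp; exists (Lsum N x); split.
  by apply: lie_sum => n; apply: lie_scale; apply: Phi_lie.
apply/funext => w; rewrite /Defs.proj; case: ifP => // hw.
case: w hw => [|c w'] hw.
  by rewrite h0 /Lsum big1 // => n _; rewrite Phi_hom ?mulr0.
have hk : (size w' < N)%N by [].
rewrite /Lsum (bigD1 (Ordinal hk)) // big1 ?addr0.
  rewrite (@Phi_Dyn (size w') x (c :: w')) // (@Dyn_prim N x (c :: w') hp) //= mulrA mulVf ?mul1r //.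
  by rewrite addr0.
move=> n hn; rewrite Phi_hom ?mulr0 //=; apply: contra hn => /eqP [hn].
by apply/eqP/val_inj; rewrite /= hn.
Qed.

End Alg.


Lemma expand (R : realType) (d e N m : nat) (B : 'I_m -> tensor R d)
  (hB : orthonormal_basis_LN N B) (x : tensor R d)
  (hx : in_LN N (Defs.proj N x)) (f : 'I_d -> 'rV[R]_e -> 'rV[R]_e) (y : 'rV[R]_e) :
  \sum_(k < N.+1) \sum_(t : k.-tuple 'I_d) x t *: fw f t y =
  \sum_(u < m) ip N x (B u) *: fT N f (B u) y.
Proof.
case: hB => _ [hon hspan]; case: (hspan _ hx) => c hc.
have hxt : forall (k : 'I_N.+1) (t : k.-tuple 'I_d), x t = \sum_(u < m) c u * B u t.
  move=> k t; rewrite -hc /Defs.proj size_tuple.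
  by have := ltn_ord k; rewrite ltnS => ->.
have hip : forall v, ip N x (B v) = c v.
  move=> v; rewrite /ip.
  under eq_bigr => k _ do under eq_bigr => t _ do rewrite hxt mulr_suml.
  under eq_bigr => k _ do rewrite exchange_big /=.
  rewrite exchange_big /=.
  rewrite (eq_bigr (fun u => c u * ip N (B u) (B v))); last first.
    move=> u _; rewrite /ip mulr_sumr; apply: eq_bigr => k _.
    by rewrite mulr_sumr; apply: eq_bigr => t _; rewrite mulrA.
  rewrite (bigD1 v) //= hon eqxx mulr1 big1 ?addr0 // => u /negbTE hu.
  by rewrite hon hu mulr0.
under [RHS]eq_bigr => u _ do rewrite hip.
rewrite /fT.
rewrite (eq_bigr (fun k : 'I_N.+1 => \sum_(t : k.-tuple 'I_d) \sum_(u < m) (c u * B u t) *: fw f t y)); last first.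
  by move=> k _; apply: eq_bigr => t _; rewrite hxt scaler_suml.
under eq_bigr => k _ do rewrite exchange_big /=.
rewrite exchange_big /=; apply: eq_bigr => u _.
rewrite scaler_sumr; apply: eq_bigr => k _.
rewrite scaler_sumr; apply: eq_bigr => t _.
by rewrite scalerA.
Qed.

Local Open Scope classical_set_scope.


Definition Dset (R : realType) (T s : R) := [set h : R | h != 0 /\ I0T T (s + h)].

Lemma proper_D (R : realType) (T s : R) : 0 < T -> I0T T s ->
  ProperFilter (within (Dset T s) (nbhs (0:R))).
Proof.
move=> hT hs; apply: Build_ProperFilter.
rewrite /within => /nbhs_ballP [e he hb].
move: hs; rewrite /I0T /= => /andP [hs0 hsT].
have h1 : Num.min e T <= e by rewrite ge_min lexx.
have h2 : Num.min e T <= T by rewrite ge_min lexx orbT.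
have h3 : 0 < Num.min e T by rewrite lt_min he hT.
set r := Num.min e T / 2.
have hr0 : 0 < r by rewrite /r; lra.
have hre : r < e by rewrite /r; lra.
have hrT : r <= T / 2 by rewrite /r; lra.
have [hsm|hsm] := leP s (T / 2).
  apply: (hb r); first by rewrite /ball /= sub0r normrN gtr0_norm.
  split; first by rewrite gt_eqF.
  by rewrite /I0T /=; apply/andP; split; lra.
apply: (hb (- r)); first by rewrite /ball /= sub0r opprK gtr0_norm.
split; first by rewrite oppr_eq0 gt_eqF.
by rewrite /I0T /=; apply/andP; split; lra.
Qed.

Lemma deriv_unique (R : realType) (T s : R) (g : R -> R) l1 l2 : 0 < T -> I0T T s ->
  has_deriv_within T g s l1 -> has_deriv_within T g s l2 -> l1 = l2.
Proof.
move=> hT hs h1 h2; have PF := proper_D hT hs.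
exact: (cvg_unique (@Rhausdorff R) h1 h2).
Qed.

Lemma deriv_eq (R : realType) (T s : R) (g1 g2 : R -> R) l :
  (forall t, I0T T t -> g1 t = g2 t) -> I0T T s ->
  has_deriv_within T g1 s l -> has_deriv_within T g2 s l.
Proof.
move=> heq hs h1; rewrite /has_deriv_within.
apply: cvg_trans h1; apply: near_eq_cvg; near=> h.
have [_ Dh] : Dset T s h by near: h; apply: withinT.
by rewrite !heq.
Unshelve. all: by end_near.
Qed.

Lemma deriv_const (R : realType) (T s : R) (c : R) :
  has_deriv_within T (fun _ => c) s 0.
Proof.
rewrite /has_deriv_within.
have -> : (fun h : R => h^-1 *: (c - c)) = (fun _ => 0).
  by apply/funext => h; rewrite subrr scaler0.
exact: cvg_cst.
Qed.

Lemma deriv_sum (R : realType) (T s : R) (I : Type) (r : seq I) (g : I -> R -> R) (l : I -> R) :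
  (forall i, has_deriv_within T (g i) s (l i)) ->
  has_deriv_within T (fun t => \sum_(i <- r) g i t) s (\sum_(i <- r) l i).
Proof.
move=> hg; elim: r => [|i r IH].
  rewrite big_nil.
  have -> : (fun t => \sum_(i <- [::]) g i t) = (fun _ => 0).
    by apply/funext => t; rewrite big_nil.
  exact: deriv_const.
rewrite /has_deriv_within.
have -> : (fun h : R => h^-1 *: (\sum_(j <- i :: r) g j (s + h) - \sum_(j <- i :: r) g j s)) =
  (fun h : R => h^-1 *: (g i (s + h) - g i s)) \+
  (fun h : R => h^-1 *: (\sum_(j <- r) g j (s + h) - \sum_(j <- r) g j s)).
  apply/funext => h; rewrite /= !big_cons -scalerDr; congr (_ *: _).
  by rewrite opprD addrACA.
rewrite big_cons; exact: cvgD (hg i) IH.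
Qed.

Lemma deriv_prod0 (R : realType) (T s : R) (g1 g2 : R -> R) l1 l2 :
  g1 s = 0 -> g2 s = 0 ->
  has_deriv_within T g1 s l1 -> has_deriv_within T g2 s l2 ->
  has_deriv_within T (fun t => g1 t * g2 t) s 0.
Proof.
move=> z1 z2 h1 h2; rewrite /has_deriv_within.
have hid : (fun h : R => h) @ within (Dset T s) (nbhs (0:R)) --> (0:R).
  exact: cvg_within.
have := cvgM (cvgM hid h1) h2; rewrite !mul0r.
move=> H; apply: (cvg_trans _ (H (within_filter _ _) (within_filter _ _))); apply: near_eq_cvg; near=> h.
have [hh _] : Dset T s h by near: h; apply: withinT.
rewrite /= z1 z2 !subr0 mulr0 subr0 /GRing.scale /=.
by rewrite [h * _]mulrA mulfV // mul1r mulrCA.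
Unshelve. all: by end_near.
Qed.

Lemma tmul_nil (R : realType) d (x y : tensor R d) : tmul x y [::] = x [::] * y [::].
Proof. by rewrite /tmul big_ord_recl big_ord0 addr0. Qed.

Lemma tmulN_nil (R : realType) d N (x y : tensor R d) : tmulN N x y [::] = x [::] * y [::].
Proof. by rewrite /tmulN /Defs.proj /= tmul_nil. Qed.

Lemma Nsgrm_one (R : realType) d (T : R) N (X : R -> R -> tensor R d) :
  is_Nsgrm T N X -> forall s t, I0T T s -> I0T T t -> X s t [::] = 1.
Proof.
case=> [hz [[s1 [t1 [hs1 [ht1 hne]]]] [hsh [hch _]]]] s t hs ht.
have zero_of : forall a b, I0T T a -> I0T T b -> X a b [::] = 0 -> forall w, X a b w = 0.
  move=> a b ha hb h0 w; case: (leqP (size w) N) => hw; last by apply: hz.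
  have := hsh a b ha hb w [::]; rewrite ps_nil_r h0 mulr0 addn0; exact.
have hne0 : X s1 t1 [::] != 0.
  by apply/eqP => h0; apply: hne; apply/funext => w; exact: zero_of.
have hst : X s t [::] != 0.
  apply: contraNneq hne0 => h0.
  by rewrite -(hch s1 s t1) // tmulN_nil -(hch s t t1) // tmulN_nil h0 mul0r mulr0.
have := hsh s t hs ht [::] [::] (leq0n N); rewrite ps_nil_l => h.
by apply: (mulIf hst); rewrite mul1r -h.
Qed.

Lemma Nsgrm_diag0 (R : realType) d (T : R) N (X : R -> R -> tensor R d) :
  is_Nsgrm T N X -> forall s, I0T T s -> forall w, w != [::] -> X s s w = 0.
Proof.
move=> hX s hs w; have h1 := Nsgrm_one hX hs hs.
case: hX => [hz [_ [_ [hch _]]]].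
have [n] := ubnP (size w); elim: n w => // n IH w /ltnSE hw hne.
case: (leqP (size w) N) => hwN; last by apply: hz.
have := hch s s s hs hs hs; move/(congr1 (fun z => z w)).
rewrite /tmulN /Defs.proj hwN /tmul.
case: w hw hne hwN IH => [//|c w'] hw _ hwN IH.
rewrite big_ord_recl /= h1 mul1r big_ord_recr /= !add0n take_size drop_size h1 mulr1.
rewrite big1 ?add0r; first by lra.
move=> i _; rewrite (IH (drop i w')) ?mulr0 //.
  by rewrite size_drop; apply: leq_ltn_trans (leq_subr _ _) _.
by rewrite -size_eq0 size_drop subn_eq0 -ltnNge.
Qed.

Lemma case1_LN (R : realType) d (T : R) N (X : R -> R -> tensor R d) Xdot :
  0 < T -> is_Nsgrm T N X -> is_diag_deriv T X Xdot ->
  forall s, I0T T s -> in_LN N (Defs.proj N (Xdot s)).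
Proof.
move=> hT hX hXd s hs; apply: in_LN_prim.
  apply: (deriv_unique hT hs (hXd s [::] hs)).
  apply: (@deriv_eq R T s (fun _ => 1)); last exact: deriv_const.
    by move=> t ht /=; rewrite (Nsgrm_one hX hs ht).
  exact: hs.
move=> v w hv hw hvw.
have hd1 : has_deriv_within T (fun t => pair_sh (X s t) v w) s (pair_sh (Xdot s) v w).
  exact: (deriv_sum (r := shuffle v w) (g := fun z t => X s t z) (l := Xdot s) (fun z => hXd s z hs)).
have hd2 : has_deriv_within T (fun t => X s t v * X s t w) s (pair_sh (Xdot s) v w).
  apply: (deriv_eq _ hs hd1) => t ht.
  by case: hX => [_ [_ [hsh _]]]; apply: hsh.
have hd3 := deriv_prod0 (Nsgrm_diag0 hX hs hv) (Nsgrm_diag0 hX hs hw) (hXd s v hs) (hXd s w hs).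
exact: (deriv_unique hT hs hd2 hd3).
Qed.

Close Scope classical_set_scope.
Unset Implicit Arguments.

Theorem lemma2p21 (R : realType) (T : R) (d e N : nat)
  (hT : 0 < T) (hd : (0 < d)%N) (he : (0 < e)%N)
  (f : 'I_d -> 'rV[R]_e -> 'rV[R]_e) (hf : forall i, vector_field (f i))
  (X : R -> R -> tensor R d) (Xdot : R -> tensor R d)
  (hXdot : is_diag_deriv T X Xdot)
  (hX : is_Nsgrm T N X \/
        (is_good_sgrm T X Xdot /\ forall s, I0T T s -> in_LN N (Xdot s)))
  (m : nat) (B : 'I_m -> tensor R d) (hB : orthonormal_basis_LN N B)
  (Y : R -> 'rV[R]_e) (hY : smooth_on T Y) :
  solves T N f Xdot Y <->
  (forall s, I0T T s -> has_deriv_within T Y s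
     (\sum_(u < m) ip N (Xdot s) (B u) *: fT N f (B u) (Y s))).
Proof.
have key : forall s, I0T T s -> in_LN N (Defs.proj N (Xdot s)).
  case: hX => [hN|[_ hL]] s hs; first exact: (case1_LN hT hN hXdot hs).
  case: (hL s hs) => l [hl ->]; exists l; split => //.
  by apply/funext => w; rewrite /Defs.proj; case: ifP => // ->.
have eqV : forall s, I0T T s ->
  \sum_(k < N.+1) \sum_(t : k.-tuple 'I_d) Xdot s t *: fw f t (Y s) =
  \sum_(u < m) ip N (Xdot s) (B u) *: fT N f (B u) (Y s).
  by move=> s hs; apply: (expand hB (key s hs)).
split => [[_ hd'] s hs | h]; first by rewrite -eqV //; exact: hd'.
by split => // s hs; rewrite eqV //; exact: h.
Qed.
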